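(* Let $G=(S,T,\pi)$ be a countable two-person win-lose game such that every set in $\mathcal{B}^2(G)$ is finite, and assume $G$ is LNG-free. Then the infima below are attained and $$\sup_{\mathbf{p}\in\Delta(S)}\min_{\mathbf{q}\in\Delta(T)}\pi^{\mathrm{mix}}(\mathbf{p},\mathbf{q})=1=\min_{\mathbf{q}\in\Delta(T)}\sup_{\mathbf{p}\in\Delta(S)}\pi^{\mathrm{mix}}(\mathbf{p},\mathbf{q}).$$
   Context: A two-person win-lose game is $G=(S,T,\pi)$ with non-empty $S,T$ and $\pi:S\times T\to\{0,1\}$; countable means $|S|=|T|=\aleph_0$. $\Delta(X)$ is the set of probability distributions on $X$ with at most countable support; $\pi^{\mathrm{mix}}(\mathbf{p},\mathbf{q})=\sum p_sq_t\pi(s,t)$. For $t\in T$, $B_t=\{s\in S:\pi(s,t)=0\}$ and $\mathcal{B}^2(G)=\{B_t:t\in T\}$. $G$ is LNG-free if there are no sequences of distinct $s_1,s_2,\ldots\in S$ and distinct $t_1,t_2,\ldots\in T$ with $\pi(s_i,t_j)=1\iff i\ge j$. *)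

(* Defs.v *)
From HB Require Import structures.
From mathcomp Require Import all_boot all_order all_algebra.
From mathcomp Require Import all_classical all_reals.
From mathcomp Require Import cardinality ereal esum.
Set Implicit Arguments. Unset Strict Implicit. Unset Printing Implicit Defensive.
Import Order.TTheory GRing.Theory Num.Theory.
Local Open Scope classical_set_scope.
Local Open Scope ring_scope.

Definition countably_infinite (X : choiceType) : Prop :=
  card_eq [set: X] [set: nat].

Definition Delta (R : realType) (X : choiceType) : set (X -> R) :=
  [set p | (forall x, 0 <= p x) /\ (\esum_(x in [set: X]) (p x)%:E = 1%E)].

(* Mixed payoff, as an extended real (it always lies in [0,1]). *)
Definition pimix (R : realType) (S T : choiceType) (pi : S -> T -> bool)
  (p : S -> R) (q : T -> R) : \bar R :=
  \esum_(st in [set: S * T]) (p st.1 * q st.2 * (pi st.1 st.2)%:R)%:E.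

Definition Bset (S T : Type) (pi : S -> T -> bool) (t : T) : set S :=
  [set s | pi s t = false].

Definition LNG_free (S T : Type) (pi : S -> T -> bool) : Prop :=
  ~ exists (s : nat -> S) (t : nat -> T),
      injective s /\ injective t /\
      forall i j, pi (s i) (t j) = (j <= i)%N.

Arguments Delta : clear implicits.

(* Main.v *)
Require Import Defs.
From HB Require Import structures.
From mathcomp Require Import all_boot all_order all_algebra.
From mathcomp Require Import all_classical all_reals.
From mathcomp Require Import cardinality ereal esum.
From mathcomp Require Import ring lra.
Import Order.TTheory GRing.Theory Num.Theory.
Local Open Scope classical_set_scope.
Local Open Scope ring_scope.

Section Comb.
Variables (T : choiceType) (pi : nat -> T -> bool) (bnd : T -> nat).
Hypothesis Hbnd : forall t i, (bnd t <= i)%N -> pi i t.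
Hypothesis HL : LNG_free pi.

Lemma pigeon (y : nat -> nat) : injective y ->
  forall m B, exists k, (m < k)%N /\ (B <= y k)%N.
Proof.
move=> yi m B; apply: contrapT => H.
have H' : forall k, (m < k)%N -> (y k < B)%N.
  move=> k mk; rewrite ltnNge; apply/negP => Bk; apply: H; by exists k.
have U : uniq (map y (iota m.+1 B.+1)).
  by rewrite map_inj_uniq ?iota_uniq.
have : (size (map y (iota m.+1 B.+1)) <= size (iota 0 B))%N.
  apply: uniq_leq_size => // z /mapP [k]; rewrite mem_iota => /andP[k1 _] ->.
  by rewrite mem_iota add0n H'.
by rewrite size_map !size_iota ltnn.
Qed.

Lemma ladder_chain (y : nat -> nat) (tt : nat -> T) : injective y ->
  (forall n k, (k <= n)%N -> ~~ pi (y k) (tt n)) -> False.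
Proof.
move=> yi H.
have [pick Hpick] : exists pick : nat -> nat -> nat, forall m B,
    (m < pick m B)%N /\ (B <= y (pick m B))%N.
  have := @choice (nat * nat)%type nat
     (fun mB k => (mB.1 < k)%N /\ (mB.2 <= y k)%N).
  case=> [[m B]|f Hf]; first exact: pigeon.
  by exists (fun m B => f (m, B)) => m B; apply: (Hf (m, B)).
pose g := fix g n := if n is n'.+1 then
   let k := pick (g n').1 (g n').2 in (k, maxn (g n').2 (bnd (tt k)))
   else (0%N, bnd (tt 0%N)).
pose kk n := pick (g n).1 (g n).2.
have g1 n : (g n.+1).1 = kk n by [].
have kkS n : (kk n < kk n.+1)%N by case: (Hpick (g n.+1).1 (g n.+1).2).
have kkmono : {homo kk : i j / (i < j)%N}.
  apply: homo_ltn => //; exact: ltn_trans.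
have kkle i j : (i <= j)%N -> (kk i <= kk j)%N.
  rewrite leq_eqVlt => /orP[/eqP->//|/kkmono/ltnW//].
have g2mono : {homo (fun n => (g n).2) : i j / (i <= j)%N}.
  apply: homo_leq; [by []|by move=> ???; apply: leq_trans|move=> n /=; exact: leq_maxl].
have g2_0 n : (bnd (tt 0%N) <= (g n).2)%N by apply: (g2mono 0%N n).
have g2_j j n : (j < n)%N -> (bnd (tt (kk j)) <= (g n).2)%N.
  move=> jn; apply: leq_trans (g2mono j.+1 n jn); by rewrite /= leq_maxr.
have ykk n : ((g n).2 <= y (kk n))%N by case: (Hpick (g n).1 (g n).2).
pose s i := y (kk i).
pose t j := if j is j'.+1 then tt (kk j') else tt 0%N.
have pat : forall i j, pi (s i) (t j) = (j <= i)%N.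
  move=> i j; case: (leqP j i) => ji.
    apply: Hbnd; case: j ji => [|j'] ji.
      exact: leq_trans (g2_0 i) (ykk i).
    exact: leq_trans (g2_j j' i ji) (ykk i).
  case: j ji => [//|j'] ji; apply/negbTE; apply: H; exact: kkle.
apply: HL; exists s, t; split; [|split; last exact: pat].
  move=> i j /yi e; case: (ltngtP i j) => // h; have := kkmono _ _ h; by rewrite e ltnn.
move=> i j tij; apply: contrapT => nij.
wlog lij : i j tij nij / (i < j)%N.
  move=> W; case: (ltngtP i j) => [h|h|h]; [exact: (W i j)|apply: (W j i) => //|exact: nij].
  by move=> e; apply: nij.
have := pat i i; have := pat i j; rewrite tij leqnn.
by rewrite leqNgt lij => ->.
Qed.

Definition covers (F : seq nat) t := all (fun i => ~~ pi i t) F.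
Definition realizable F := exists t, covers F t.
Definition ext (G F : seq nat) := exists x, x \notin F /\ G = x :: F /\ realizable G.

Lemma acc_ext F : Acc ext F.
Proof.
apply: contrapT => nF.
have step : forall F, ~ Acc ext F -> exists G, ext G F /\ ~ Acc ext G.
  move=> F0 nA; apply: contrapT => H; apply: nA; constructor => G eG.
  by apply: contrapT => nG; apply: H; exists G.
have [nxt Hnxt] : exists nxt : seq nat -> seq nat, forall F,
    ~ Acc ext F -> ext (nxt F) F /\ ~ Acc ext (nxt F).
  have := @choice (seq nat) (seq nat)
    (fun F G => ~ Acc ext F -> ext G F /\ ~ Acc ext G).
  case=> [F0|f Hf]; last by exists f.
  have [A|nA] := pselect (Acc ext F0); first by exists F0.
  by have [G HG] := step F0 nA; exists G.
pose ch n := iter n nxt F.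
have chA n : ~ Acc ext (ch n).
  by elim: n => [//|n IH]; rewrite /ch iterS; case: (Hnxt _ IH).
have chE n : ext (ch n.+1) (ch n) by rewrite /ch iterS; case: (Hnxt _ (chA n)).
pose y n := head 0%N (ch n.+1).
have yE n : ch n.+1 = y n :: ch n /\ y n \notin ch n.
  have [x [xn [e _]]] := chE n; by rewrite /y e.
have yin k n : (k < n)%N -> y k \in ch n.
  elim: n => [//|n IH]; rewrite ltnS leq_eqVlt => /orP[/eqP->|kn].
    by rewrite (yE n).1 mem_head.
  by rewrite (yE n).1 in_cons IH ?orbT.
have yi : injective y.
  move=> i j e; apply: contrapT => nij.
  wlog lij : i j e nij / (i < j)%N.
    move=> W; case: (ltngtP i j) => [h|h|h]; [exact: (W i j)|exact: (W j i (esym e) (fun h' => nij (esym h')) h)|exact: nij].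
  by have := (yE j).2; rewrite -e yin.
have [tt Htt] : exists tt : nat -> T, forall n, covers (ch n.+1) (tt n).
  have := @choice nat T (fun n t => covers (ch n.+1) t).
  case=> [n|f Hf]; last by exists f.
  by have [x [_ [-> r]]] := chE n.
apply: (@ladder_chain y tt yi) => n k kn.
have := Htt n; rewrite /covers => /allP; apply; exact: yin.
Qed.

Definition Lrel (L' L : seq (seq nat)) :=
  L != [::] /\ forall G, G \in L' -> exists2 F, F \in L & ext G F.

Lemma Lrel_eqi L1 L2 L : L1 =i L2 -> Lrel L L1 -> Lrel L L2.
Proof.
move=> e [n1 H]; split.
  case: L2 e {H} n1 => // e; case: L1 e => // a L1 e _.
  by have := e a; rewrite mem_head in_nil.
by move=> G /H [F F1 eF]; exists F; rewrite -?e.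
Qed.

Lemma Acc_eqi L1 L2 : L1 =i L2 -> Acc Lrel L1 -> Acc Lrel L2.
Proof.
move=> e [H]; constructor => L' r; apply: H; apply: Lrel_eqi r.
by move=> x; rewrite e.
Qed.

Lemma Acc_nil : Acc Lrel [::].
Proof. by constructor => L' [/eqP]. Qed.

Lemma Acc_cons a : Acc ext a -> forall L, Acc Lrel L -> Acc Lrel (a :: L).
Proof.
elim=> {}a _ IHa L AL; constructor => L'' [_ HL''].
have cat_acc : forall A L', (forall b, b \in A -> ext b a) -> Acc Lrel L' ->
    Acc Lrel (A ++ L').
  elim=> [//|b A IHA] L' HA AL'; rewrite cat_cons.
  apply: IHa; first by apply: HA; rewrite mem_head.
  by apply: IHA => // c cA; apply: HA; rewrite in_cons cA orbT.
pose A := [seq b <- L'' | `[< ext b a >]].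
pose L' := [seq b <- L'' | ~~ `[< ext b a >]].
apply: (@Acc_eqi (A ++ L')).
  by move=> x; rewrite mem_cat !mem_filter; case: (`[< ext x a >]) => /=; [rewrite orbF|].
apply: cat_acc; first by move=> b; rewrite mem_filter => /andP[/asboolP].
case: (altP (L' =P [::])) => [->|nL']; first exact: Acc_nil.
case: AL => AL; apply: AL; split.
  apply/negP => /eqP L0.
  have [G] : exists G, G \in L' by move: nL'; case: (L') => // G ? _; exists G; rewrite mem_head.
  rewrite mem_filter => /andP[/asboolPn nG /HL''] [F].
  by rewrite in_cons L0 in_nil orbF => /eqP->.
move=> G; rewrite mem_filter => /andP[/asboolPn nG /HL''] [F].
by rewrite in_cons => /orP[/eqP->//|FL eG]; exists F.
Qed.

Lemma Acc_list L : Acc Lrel L.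
Proof. elim: L => [|a L IH]; [exact: Acc_nil|exact: Acc_cons (acc_ext a) _ IH]. Qed.

Variable R : realType.

Definition good (L : seq (seq nat)) := forall (a : nat) (eps : R), 0 < eps ->
  exists n (f : nat -> R), [/\ (forall i, 0 <= f i),
    (forall i, (i < a)%N || (n <= i)%N -> f i = 0),
    \sum_(i < n) f i = 1 &
    forall F t, F \in L -> covers F t -> \sum_(i < n | ~~ pi i t) f i <= eps].

Lemma sum_ext (g : nat -> R) n M (P : pred nat) : (n <= M)%N ->
  (forall k, (n <= k)%N -> g k = 0) ->
  \sum_(i < M | P i) g i = \sum_(i < n | P i) g i.
Proof.
move=> nM g0; rewrite (big_ord_widen_cond M P g nM) [RHS]big_mkcond [LHS]big_mkcond.
apply: eq_bigr => i _; case: (P i) => //=; case: ltnP => // ?; by rewrite g0.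
Qed.

Lemma good_all L : good L.
Proof.
elim: (Acc_list L) => {}L _ IH.
case: (altP (L =P [::])) => [->|nL] a eps e0.
  exists a.+1, (fun i => (i == a)%:R); split => //.
  - move=> i /orP[ia|ai]; first by rewrite ltn_eqF.
    by rewrite gtn_eqF.
  - rewrite big_ord_recr /= eqxx big1 ?add0r // => i _.
    by rewrite ltn_eqF.
pose a' := maxn a (\max_(F <- L) \max_(i <- F) i).+1.
have a'F F i : F \in L -> i \in F -> (i < a')%N.
  move=> FL iF; rewrite leq_max ltnS; apply/orP; right.
  apply: leq_trans (leq_bigmax_seq F FL isT).
  exact: (leq_bigmax_seq i iF isT).
have aa' : (a <= a')%N by rewrite leq_maxl.
pose ch m := [seq G <- [seq x :: F | F <- L, x <- iota a' (m - a')] | `[< realizable G >]].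
have chL m : Lrel (ch m) L.
  split => // G; rewrite mem_filter => /andP[/asboolP rG /allpairsP [[F x] [/= FL]]].
  rewrite mem_iota => /andP[ax _] eG.
  exists F => //; exists x; split => //.
  by apply/negP => /(a'F _ _ FL); rewrite ltnNge ax.
have e2 : 0 < eps / 2 by rewrite divr_gt0.
pose N := (Num.Def.trunc (2 / eps)).+1.
have N0 : (0 < N)%N by [].
have NR : 0 < N%:R :> R by rewrite ltr0n.
have Neps : N%:R^-1 <= eps / 2.
  have h : 2 / eps < N%:R by apply: truncnS_gt.
  move: h; rewrite ltr_pdivrMr // => h.
  rewrite -[N%:R^-1]mul1r ler_pdivrMr //; nra.
have [NF [FF HF]] : exists (NF : nat -> nat) (FF : nat -> nat -> R), forall m,
  [/\ (forall i, 0 <= FF m i),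
    (forall i, (i < a')%N || (NF m <= i)%N -> FF m i = 0),
    \sum_(i < NF m) FF m i = 1 &
    forall F t, F \in ch m -> covers F t -> \sum_(i < NF m | ~~ pi i t) FF m i <= eps / 2].
  have := @choice nat (nat * (nat -> R))%type (fun m nf =>
    [/\ (forall i, 0 <= nf.2 i),
    (forall i, (i < a')%N || (nf.1 <= i)%N -> nf.2 i = 0),
    \sum_(i < nf.1) nf.2 i = 1 &
    forall F t, F \in ch m -> covers F t -> \sum_(i < nf.1 | ~~ pi i t) nf.2 i <= eps / 2]).
  case=> [m|g Hg]; last by exists (fun m => (g m).1), (fun m => (g m).2).
  have [n [f Hf]] := IH _ (chL m) a' (eps / 2) e2.
  by exists (n, f).
pose m i := iter i (fun m => maxn m (NF m)) a'.
have mS i : m i.+1 = maxn (m i) (NF (m i)) by [].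
have mmono : {homo m : i j / (i <= j)%N}.
  apply: homo_leq; [by []|by move=> ???; apply: leq_trans|move=> n; by rewrite mS leq_maxl].
have am i : (a' <= m i)%N by apply: (mmono 0%N).
have nm i : (NF (m i) <= m i.+1)%N by rewrite mS leq_maxr.


exists (m N), (fun k => N%:R^-1 * \sum_(i < N) FF (m i) k); split.
- by move=> k; rewrite mulr_ge0 ?invr_ge0 ?ler0n // sumr_ge0 // => i _; case: (HF (m i)) => H _ _ _; exact: H.
- move=> k /orP[ka|Nk]; rewrite big1 ?mulr0 // => i _; case: (HF (m i)) => _ -> //.
    by rewrite (leq_trans ka aa').
  apply/orP; right; apply: leq_trans Nk; apply: leq_trans (nm i) _; exact: mmono.
- rewrite -mulr_sumr exchange_big /=.
  rewrite (eq_bigr (fun _ => 1)) ?sumr_const ?card_ord ?mulVf // => [|i _].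
    by rewrite -[_ *+ _]mulr_natr mul1r; apply: lt0r_neq0.
  case: (HF (m i)) => _ H0 H1 _.
  transitivity (\sum_(i0 < NF (m i)) FF (m i) i0); last exact: H1.
  apply: (@sum_ext (FF (m i)) (NF (m i)) (m N) xpredT).
    apply: leq_trans (nm i) _; exact: mmono.
  by move=> k nk; apply: H0; rewrite nk orbT.
move=> F t FL cFt.
pose mu i := \sum_(k < NF (m i) | ~~ pi k t) FF (m i) k.
have mu_eq (i : 'I_N) : \sum_(k < m N | ~~ pi k t) FF (m i) k = mu i.
  case: (HF (m i)) => _ H0 _ _; apply: (@sum_ext (FF (m i)) (NF (m i)) (m N) (fun k => ~~ pi k t)).
    apply: leq_trans (nm i) _; exact: mmono.
  by move=> k nk; apply: H0; rewrite nk orbT.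
have mu0 i : 0 <= mu i by apply: sumr_ge0 => k _; case: (HF (m i)) => H _ _ _; exact: H.
have mu1 i : mu i <= 1.
  case: (HF (m i)) => H _ H1 _; rewrite -H1 /mu [X in _ <= X](bigID (fun k : 'I__ => ~~ pi k t)) /=.
  by rewrite lerDl sumr_ge0.
have claim i j : (i < j)%N -> eps / 2 < mu i -> mu j <= eps / 2.
  move=> ij bad.
  have [k [pk fk]] : exists k : 'I_(NF (m i)), ~~ pi k t /\ FF (m i) k != 0.
    apply: contrapT => H; move: bad; rewrite /mu big1 => [h|k pk].
      by have := lt_trans e2 h; rewrite ltxx.
    by apply/eqP/negPn/negP => fk; apply: H; exists k.
  have ak : (a' <= k)%N.
    rewrite leqNgt; apply/negP => ka; move/eqP: fk; apply.
    by case: (HF (m i)) => _ -> //; rewrite ka.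
  have kj : (k < m j)%N.
    apply: leq_trans (ltn_ord k) _; apply: leq_trans (nm i) _; exact: mmono.
  case: (HF (m j)) => _ _ _ Hj; apply: (Hj (nat_of_ord k :: F)); last by rewrite /covers /= pk.
  rewrite mem_filter; apply/andP; split.
    by apply/asboolP; exists t; rewrite /covers /= pk.
  apply: (allpairs_f (fun F x => x :: F) FL).
  by rewrite mem_iota ak subnKC.
have Hsum : \sum_(i < N) mu i <= 1 + N%:R * (eps / 2).
  have [[i0 bad]|nbad] := pselect (exists i0 : 'I_N, eps / 2 < mu i0).
    rewrite (bigD1 i0) //=; apply: lerD => //.
    apply: le_trans (_ : \sum_(i < N | i != i0) (eps / 2) <= _).
      apply: ler_sum => i ni; rewrite leNgt; apply/negP => bi.
      case: (ltngtP i i0) => [h|h|/val_inj h]; last by rewrite h eqxx in ni.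
        by move: (claim _ _ h bi); rewrite leNgt bad.
      by move: (claim _ _ h bad); rewrite leNgt bi.
    rewrite big_mkcond /= [X in _ <= X](_ : _ = \sum_(i < N) (eps / 2)).
      by apply: ler_sum => i _; case: ifP => // _; rewrite ltW.
    by rewrite sumr_const card_ord mulr_natl.
  apply: le_trans (_ : \sum_(i < N) (eps / 2) <= _).
    apply: ler_sum => i _; rewrite leNgt; apply/negP => bi; apply: nbad; by exists i.
  by rewrite sumr_const card_ord mulr_natl lerDr.
rewrite (eq_bigr (fun k : 'I__ => N%:R^-1 * \sum_(i < N) FF (m i) k)) //.
rewrite -mulr_sumr exchange_big /= (eq_bigr (fun i : 'I__ => mu i)) //.
apply: le_trans (_ : N%:R^-1 * (1 + N%:R * (eps / 2)) <= _).
  by rewrite ler_wpM2l // invr_ge0 ler0n.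
rewrite mulrDr mulr1 mulKf; last by rewrite lt0r_neq0.
by rewrite [X in _ <= X](splitr eps) lerD.
Qed.

Definition Mt (f : nat -> R) t := \sum_(i < bnd t | ~~ pi i t) f i.

Lemma Mt_ext (f : nat -> R) t B : (bnd t <= B)%N ->
  \sum_(i < B | ~~ pi i t) f i = Mt f t.
Proof.
move=> bB; rewrite /Mt big_mkcond [RHS]big_mkcond /=.
rewrite (@sum_ext (fun i => if ~~ pi i t then f i else 0) (bnd t) B xpredT) //.
by move=> k /Hbnd ->.
Qed.

Lemma argmax (f : nat -> R) (t0 : T) : (forall i, 0 <= f i) ->
  (forall K, \sum_(i < K) f i <= 1) ->
  (forall d, 0 < d -> exists K, 1 - d <= \sum_(i < K) f i) ->
  exists ts, forall t, Mt f t <= Mt f ts.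
Proof.
move=> f0 f1 ftail; apply: contrapT => H.
have Hn ts : exists t, Mt f ts < Mt f t.
  apply: contrapT => H2; apply: H; exists ts => t; rewrite leNgt; apply/negP => h.
  by apply: H2; exists t.
have M1 t : Mt f t <= 1.
  apply: le_trans (f1 (bnd t)); rewrite /Mt [X in _ <= X](bigID (fun i : 'I__ => ~~ pi i t)) /=.
  by rewrite lerDl sumr_ge0.
pose E := [set Mt f t | t in [set: T]].
have hs : has_sup E.
  split; first by exists (Mt f t0), t0.
  by exists 1 => _ [t _ <-].
pose c := sup E.
have Mc t : Mt f t <= c by apply: sup_upper_bound => //; exists t.
have Mlt t : Mt f t < c by have [t' h] := Hn t; apply: lt_le_trans h (Mc t').
pose heavy F := forall d, 0 < d -> exists t, covers F t /\ c - d < Mt f t.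
have h0 : heavy [::].
  move=> d d0; have [_ [t _ <-] h] := sup_adherent d0 hs; by exists t.
suff : forall F, Acc ext F -> heavy F -> False by move/(_ _ (acc_ext [::]) h0).
move=> F; elim=> {}F _ IH hF.
pose beta := (\max_(i <- F) i).+1.
pose mF := \sum_(i < beta | (i : nat) \in F) f i.
pose Rr t := \sum_(i < bnd t | ~~ pi i t && ((i : nat) \notin F)) f i.
have split_t t : covers F t -> Mt f t = mF + Rr t.
  move=> cF; rewrite /Mt (bigID (fun i : 'I__ => nat_of_ord i \in F)) /=; congr (_ + _).
  rewrite (eq_bigl (fun i : 'I__ => nat_of_ord i \in F)); last first.
    move=> i /=; case iF: (nat_of_ord i \in F); rewrite ?andbF ?andbT //.
    by move: cF => /allP /(_ _ iF) ->.
  rewrite big_mkcond [mF]big_mkcond /=.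
  rewrite -(@sum_ext (fun i => if i \in F then f i else 0) (bnd t) (maxn beta (bnd t)) xpredT) ?leq_maxr //; last first.
    move=> k bk; case kF: (k \in F) => //.
    by move: cF => /allP /(_ _ kF); rewrite Hbnd.
  rewrite (@sum_ext (fun i => if i \in F then f i else 0) beta (maxn beta (bnd t)) xpredT) ?leq_maxl //.
  move=> k bk; case kF: (k \in F) => //.
  by move: bk; rewrite ltnNge (leq_bigmax_seq k kF isT).
have [t1 [c1 _]] := hF 1 ltr01.
have mFc : mF < c.
  apply: le_lt_trans (Mlt t1); rewrite split_t // lerDl sumr_ge0 //.
pose m := c - mF.
have m0 : 0 < m by rewrite subr_gt0.
have [K HK] := ftail (m / 2) (divr_gt0 m0 (ltr0Sn _ 1)).
have key t : covers F t -> m / 2 < Rr t -> exists x, [/\ (x < K)%N, ~~ pi x t & x \notin F].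
  move=> cF hR; apply: contrapT => nx; move: hR; apply/negP; rewrite -leNgt.
  pose B' := maxn (bnd t) K.
  have e1 : Rr t = \sum_(i < B' | ~~ pi i t && ((i : nat) \notin F)) f i.
    rewrite /Rr big_mkcond [RHS]big_mkcond /=.
    rewrite (@sum_ext (fun i => if ~~ pi i t && (i \notin F) then f i else 0) (bnd t) B' xpredT) ?leq_maxl //.
    by move=> k /Hbnd ->.
  have e2 : \sum_(i < B') f i = \sum_(i < K) f i + \sum_(i < B' | ~~ (i < K)%N) f i.
    rewrite (bigID (fun i : 'I__ => (nat_of_ord i < K)%N)) /=; congr (_ + _).
    by rewrite (big_ord_widen_cond B' xpredT f (leq_maxr _ _)).
  rewrite e1; apply: le_trans (_ : \sum_(i < B' | ~~ (i < K)%N) f i <= _).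
    rewrite big_mkcond [X in _ <= X]big_mkcond /=; apply: ler_sum => i _.
    case: (boolP (~~ pi i t && ((i : nat) \notin F))) => [/andP[pt nF]|_]; last by case: ifP.
    case: (boolP (~~ (i < K)%N)) => iK //.
    by exfalso; apply: nx; exists i; split; [exact: negbNE iK|exact: pt|exact: nF].
  have := f1 B'; rewrite e2; lra.
have [dfun Hd] : exists dfun : nat -> R, forall x, 0 < dfun x /\
    (x \notin F -> forall t, covers (x :: F) t -> Mt f t <= c - dfun x).
  have := @choice nat R (fun x d => 0 < d /\
    (x \notin F -> forall t, covers (x :: F) t -> Mt f t <= c - d)).
  case=> [x|g Hg]; last by exists g.
  have [xF|xnF] := boolP (x \in F); first by exists 1; split => //; rewrite xF.
  have [[t ct]|nr] := pselect (realizable (x :: F)); last first.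
    exists 1; split => // _ t ct; exfalso; apply: nr; by exists t.
  have nh : ~ heavy (x :: F).
    move=> hx; apply: (IH (x :: F)) hx; exists x; split; [exact: xnF|split; [by []|by exists t]].
  have [d [d0 hd]] : exists d, 0 < d /\ forall t, covers (x :: F) t -> ~ (c - d < Mt f t).
    apply: contrapT => h; apply: nh => d d0; apply: contrapT => h2; apply: h.
    by exists d; split => // t' ct' h3; apply: h2; exists t'.
  exists d; split => // _ t' ct'; rewrite leNgt; apply/negP; exact: hd.
have [d0 [d0p [d0m d0K]]] : exists d0, [/\ 0 < d0, d0 <= m / 2 & forall x, (x < K)%N -> d0 <= dfun x].
  elim: K {HK key} => [|K [d [dp dm dK]]].
    by exists (m / 2); split => //; apply: divr_gt0.
  exists (Num.min d (dfun K)); split.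
  - by rewrite lt_min dp; case: (Hd K).
  - by rewrite ge_min dm.
  - move=> x; rewrite ltnS leq_eqVlt => /orP[/eqP->|xK]; first by rewrite ge_min lexx orbT.
    by rewrite ge_min dK.
have [t [cF ht]] := hF d0 d0p.
have hR : m / 2 < Rr t.
  have := split_t t cF; rewrite /m in d0m *; lra.
have [x [xK px xF]] := key t cF hR.
have cxF : covers (x :: F) t by rewrite /covers /= px; exact: cF.
have h := (Hd x).2 xF t cxF.
have := d0K x xK; lra.
Qed.
End Comb.

Local Open Scope ereal_scope.

Section Conv.
Variable R : realType.

Lemma esumZ (X : choiceType) (I : set X) (a : X -> \bar R) (c : R) :
  (0 <= c)%R -> (forall i, I i -> 0 <= a i) ->
  \esum_(i in I) (c%:E * a i) = c%:E * \esum_(i in I) a i.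
Proof.
move=> c0 a0; rewrite /esum -ereal_supZl //; last first.
  by apply/set0P; exists 0, set0; [exact: fsets_set0|rewrite fsbig_set0].
have dist (A : set X) : finite_set A -> A `<=` I ->
    \sum_(x \in A) (c%:E * a x) = c%:E * \sum_(x \in A) a x.
  move=> fA AI; rewrite !fsbig_finite // big_seq [X in _ = _ * X]big_seq.
  rewrite ge0_sume_distrr // => x; rewrite in_fset_set // inE => /AI; exact: a0.
congr ereal_sup; apply/seteqP; split => x.
  move=> [A [fA AI] <-]; exists (\sum_(x \in A) a x); first by exists A.
  by rewrite dist.
move=> [y [A [fA AI] <-] <-]; exists A => //; by rewrite dist.
Qed.

Lemma esum_dirac (X : choiceType) (x0 : X) (g : X -> \bar R) :
  (forall x, 0 <= g x) ->
  \esum_(x in [set: X]) (((x == x0)%:R)%:E * g x) = g x0.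
Proof.
move=> g0; rewrite (esumID [set x0]); last by move=> x _; rewrite mule_ge0 ?lee_fin.
rewrite setTI esum_set1; last by rewrite eqxx mul1e.
rewrite eqxx mul1e esum1 ?adde0 // => x [_ /= xn]; move/eqP: xn => /negbTE ->; by rewrite mul0e.
Qed.


Definition pdirac {X : choiceType} (x0 : X) : X -> R := fun x => ((x == x0)%:R)%R.

Lemma Delta_dirac (X : choiceType) (x0 : X) : Delta R X (pdirac x0).
Proof.
split; first by move=> x; rewrite /pdirac; case: (_ == _).
rewrite (eq_esum (b := fun x => ((x == x0)%:R)%:E * 1)); last by move=> x _; rewrite mule1.
by rewrite esum_dirac.
Qed.

Variables (S T : choiceType) (pi : S -> T -> bool).

Definition W (p : S -> R) t := \esum_(s in [set: S]) (p s * (pi s t)%:R)%:E.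

Lemma W_ge0 p t : (forall s, (0 <= p s)%R) -> 0 <= W p t.
Proof. by move=> p0; apply: esum_ge0 => s _; rewrite lee_fin mulr_ge0. Qed.

Lemma W_le1 p t : Delta R S p -> W p t <= 1.
Proof.
move=> [p0 p1]; rewrite -p1; apply: le_esum => s _; rewrite lee_fin.
by case: (pi s t); rewrite ?mulr1 ?mulr0.
Qed.

Lemma pimix_fub p q : (forall s, (0 <= p s)%R) -> (forall t, (0 <= q t)%R) ->
  pimix pi p q = \esum_(t in [set: T]) ((q t)%:E * W p t).
Proof.
move=> p0 q0.
have e1 : \esum_(t in [set: T]) ((q t)%:E * W p t) =
    \esum_(t in [set: T]) \esum_(s in [set: S]) (p s * q t * (pi s t)%:R)%:E.
  apply: eq_esum => t _; rewrite /W -esumZ //; last first.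
    by move=> s _; rewrite lee_fin mulr_ge0.
  by apply: eq_esum => s _; rewrite -EFinM; congr EFin; rewrite mulrCA mulrA.
rewrite e1 esum_esum; last by move=> t s _ _; rewrite lee_fin !mulr_ge0.
have -> : [set: T] `*`` (fun _ => [set: S]) = [set: T * S].
  by apply/seteqP; split => // [[t s]].
rewrite /pimix (reindex_esum [set: T * S] [set: S * T] (fun k : T * S => (k.2, k.1))) //.
rewrite setTT_bijective; exists (fun k : S * T => (k.2, k.1)); by case.
Qed.

Lemma pimix_le1 p q : Delta R S p -> Delta R T q -> pimix pi p q <= 1.
Proof.
move=> [p0 p1] [q0 q1]; rewrite pimix_fub // -q1; apply: le_esum => t _.
rewrite -[X in _ <= X]mule1; apply: lee_wpmul2l; first by rewrite lee_fin.
exact: W_le1.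
Qed.

Lemma pimix_ge p q c : (0 <= c)%R -> (forall s, (0 <= p s)%R) -> Delta R T q ->
  (forall t, c%:E <= W p t) -> c%:E <= pimix pi p q.
Proof.
move=> c0 p0 [q0 q1] H; rewrite pimix_fub // -[c%:E]mule1 -q1 -esumZ //; last first.
  by move=> t _; rewrite lee_fin.
apply: le_esum => t _; rewrite muleC; apply: lee_wpmul2l; first by rewrite lee_fin.
exact: H.
Qed.

Lemma pimix_dirac_q p t0 : (forall s, (0 <= p s)%R) -> pimix pi p (pdirac t0) = W p t0.
Proof.
move=> p0; have q0 t : (0 <= pdirac t0 t)%R by rewrite /pdirac; case: (_ == _).
rewrite pimix_fub //.
by rewrite esum_dirac // => t; apply: W_ge0.
Qed.

Lemma W_dirac s0 t : W (pdirac s0) t = ((pi s0 t)%:R)%:E.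
Proof.
rewrite /W (eq_esum (b := fun s => ((s == s0)%:R)%:E * ((pi s t)%:R)%:E)); last first.
  by move=> s _; rewrite EFinM.
by rewrite esum_dirac // => s; rewrite lee_fin; case: (pi s t).
Qed.

End Conv.
Arguments pdirac {R X} x0 _.

Local Open Scope ereal_scope.

Section Nat.
Variable R : realType.

Lemma finite_nat_bound (A : set nat) : finite_set A -> exists K, forall i, A i -> (i < K)%N.
Proof.
move=> fA; exists (\max_(i <- finmap.enum_fset (fset_set A)) i).+1 => i Ai; rewrite ltnS.
by apply: (leq_bigmax_seq i) => //; rewrite in_fset_set // inE.
Qed.

Lemma esum_finnat (f : nat -> R) n : (forall i, (0 <= f i)%R) ->
  (forall i, (n <= i)%N -> f i = 0%R) ->
  \esum_(i in [set: nat]) (f i)%:E = (\sum_(i < n) f i)%:E.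
Proof.
move=> f0 fn; rewrite (esumID `I_n); last by move=> i _; rewrite lee_fin.
rewrite setTI esum_fset //; last by move=> i _; rewrite lee_fin.
rewrite -fsbig_ord sumEFin esum1 ?adde0 // => i [_ /= ni].
by rewrite fn // leqNgt; apply/negP.
Qed.

Lemma esum_II (f : nat -> R) K : (forall i, (0 <= f i)%R) ->
  \esum_(i in `I_K) (f i)%:E = (\sum_(i < K) f i)%:E.
Proof.
move=> f0; rewrite esum_fset //; last by move=> i _; rewrite lee_fin.
by rewrite -fsbig_ord sumEFin.
Qed.

Lemma esum_nat_le (f : nat -> R) K : (forall i, (0 <= f i)%R) ->
  (\sum_(i < K) f i)%:E <= \esum_(i in [set: nat]) (f i)%:E.
Proof.
move=> f0; rewrite (esumID `I_K); last by move=> i _; rewrite lee_fin.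
rewrite setTI esum_fset //; last by move=> i _; rewrite lee_fin.
rewrite -fsbig_ord sumEFin leeDl // esum_ge0 // => i _; by rewrite lee_fin.
Qed.

Lemma esum_nat_tail (f : nat -> R) : (forall i, (0 <= f i)%R) ->
  \esum_(i in [set: nat]) (f i)%:E = 1 ->
  forall d, (0 < d)%R -> exists K, (1 - d <= \sum_(i < K) f i)%R.
Proof.
move=> f0 f1 d d0.
have : ((1 - d)%:E < \esum_(i in [set: nat]) (f i)%:E) by rewrite f1 lte_fin; lra.
move=> /ereal_sup_gt [_ [A [fA _] <-]] hA.
have [K HK] := @finite_nat_bound A fA; exists K.
rewrite -lee_fin; apply: (le_trans (ltW hA)).
rewrite -esum_II //.
apply: ereal_sup_ubound; exists A => //; split => // i /HK.
Qed.
End Nat.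

Local Close Scope ereal_scope.

Theorem corollary2p12 (R : realType) (S T : choiceType) (pi : S -> T -> bool) :
  countably_infinite S -> countably_infinite T ->
  (forall t : T, finite_set (Bset pi t)) ->
  LNG_free pi ->
  (* for each p, the infimum over q is attained *)
  (forall p, Delta R S p ->
     exists2 q0, Delta R T q0 &
       forall q, Delta R T q -> (pimix pi p q0 <= pimix pi p q)%E) /\
  (* sup_p min_q pimix = 1 *)
  ereal_sup [set ereal_inf [set pimix pi p q | q in Delta R T] | p in Delta R S]
    = 1%E /\
  (* the infimum over q of sup_p is attained *)
  (exists2 q0, Delta R T q0 &
     forall q, Delta R T q ->
       (ereal_sup [set pimix pi p q0 | p in Delta R S]
        <= ereal_sup [set pimix pi p q | p in Delta R S])%E) /\
  (* min_q sup_p pimix = 1 *)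
  ereal_inf [set ereal_sup [set pimix pi p q | p in Delta R S] | q in Delta R T]
    = 1%E.
Proof.
move=> cS cT Bfin HL.
have [g [e ge eg]] : exists g : S -> nat, bijective g.
  by move/card_set_bijP: cS => [g]; rewrite setTT_bijective => gb; exists g.
have [t0 _] : exists t0 : T, True.
  move/card_set_bijP: cT => [h]; rewrite setTT_bijective => -[h' _ _].
  by exists (h' 0%N).
have ebij : set_bij [set: nat] [set: S] e by rewrite setTT_bijective; exists g.
have reidx (a : S -> \bar R) : \esum_(s in [set: S]) a s = \esum_(i in [set: nat]) a (e i).
  exact: reindex_esum.
pose pi' i t := pi (e i) t.
have [bnd Hbnd] : exists bnd : T -> nat, forall t i, (bnd t <= i)%N -> pi' i t.
  have := @choice T nat (fun t K => forall i, (K <= i)%N -> pi' i t).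
  case=> [t|b Hb]; last by exists b.
  have fB : finite_set [set i | pi' i t = false].
    apply: sub_finite_set (finite_image g (Bfin t)) => i /= hi.
    by exists (e i); [exact: hi|exact: eg].
  have [K HK] := @finite_nat_bound _ fB; exists K => i Ki.
  apply/negP => /negP/negbTE h; have := HK i h; by rewrite ltnNge Ki.
have HL' : LNG_free pi'.
  move=> [s [t [si [ti H]]]]; apply: HL; exists (e \o s), t; split => //.
  by move=> i j /= /(can_inj eg) /si.
have ge1 (x : \bar R) : (forall d : R, (0 < d)%R -> ((1 - d)%:E <= x)%E) -> (1 <= x)%E.
  move=> H; apply/lee_addgt0Pr => d d0.
  have := H d d0; rewrite -(@leeD2rE _ d%:E) // -EFinD subrK //.
have sup_q q : Delta R T q -> ereal_sup [set pimix pi p q | p in Delta R S] = 1%E.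
  move=> Dq; apply/eqP; rewrite eq_le; apply/andP; split.
    by apply: ge_ereal_sup => _ [p Dp <-]; apply: pimix_le1.
  apply: ge1 => d d0.
  have [q0 q1] := Dq.
  have : ((1 - d)%:E < \esum_(t in [set: T]) (q t)%:E)%E by rewrite q1 lte_fin; lra.
  move=> /ereal_sup_gt [_ [A [fA _] <-]] hA.
  pose i := (\max_(t <- finmap.enum_fset (fset_set A)) bnd t).
  have piA t : A t -> pi (e i) t.
    move=> At; apply: Hbnd; apply: (leq_bigmax_seq t) => //.
    by rewrite in_fset_set // inE.
  apply: le_trans (ltW hA) _; apply: le_trans (ereal_sup_ubound _); last first.
    by exists (pdirac (e i)); [exact: Delta_dirac|reflexivity].
  have pd0 (x : S) (s : S) : (0 <= @pdirac R S x s)%R by rewrite /pdirac; case: (_ == _).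
  rewrite (@pimix_fub R S T pi _ _ (pd0 (e i)) q0).
  apply: esum_ge; exists A; first by split.
  apply: lee_fsum => // t At.
  by rewrite W_dirac piA // mule1.
have DT := @Delta_dirac R T t0.
split.
  move=> p [p0 p1].
  pose f i := p (e i).
  have f0 i : (0 <= f i)%R by exact: p0.
  have fE : \esum_(i in [set: nat]) (f i)%:E = 1%E by rewrite -p1 reidx.
  have f1 K : (\sum_(i < K) f i <= 1)%R by rewrite -lee_fin -fE; exact: esum_nat_le.
  have [ts Hts] := @argmax T pi' bnd Hbnd HL' R f t0 f0 f1 (@esum_nat_tail R f f0 fE).
  have M1 t : (Mt T pi' bnd R f t <= 1)%R.
    apply: le_trans (f1 (bnd t)); rewrite /Mt [X in (_ <= X)%R](bigID (fun i : 'I__ => ~~ pi' i t)) /=.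
    by rewrite lerDl sumr_ge0.
  have WE t : W R S T pi p t = (1 - Mt T pi' bnd R f t)%:E.
    have hW : W R S T pi p t = \esum_(i in [set: nat]) (f i * (pi' i t)%:R)%:E by rewrite /W reidx.
    have hM : \esum_(i in [set: nat]) (f i * (~~ pi' i t)%:R)%:E = (Mt T pi' bnd R f t)%:E.
      rewrite (@esum_finnat R _ (bnd t)) => [|i|i bi].
      - rewrite /Mt; congr EFin; rewrite [RHS]big_mkcond; apply: eq_bigr => i _.
        by case: (pi' i t); rewrite ?mulr0 ?mulr1.
      - by rewrite mulr_ge0 //; case: (~~ _).
      - by rewrite Hbnd // mulr0.
    have hS : 1%E = (W R S T pi p t + (Mt T pi' bnd R f t)%:E)%E.
      rewrite -fE hW -hM -esumD => [|i _|i _]; last 2 first.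
      - by rewrite lee_fin mulr_ge0 //; case: (pi' i t).
      - by rewrite lee_fin mulr_ge0 //; case: (~~ _).
      apply: eq_esum => i _; rewrite -EFinD -mulrDr.
      by case: (pi' i t) => /=; rewrite ?addr0 ?add0r ?mulr1.
    have finW : W R S T pi p t \is a fin_num.
      rewrite ge0_fin_numE ?W_ge0 //; apply: le_lt_trans (_ : W R S T pi p t <= 1)%E _; [by apply: W_le1; split|exact: ltey].
    move: hS; rewrite -(fineK finW) -EFinD => /eqP; rewrite eqe => /eqP h.
    by congr EFin; rewrite h addrK.
  exists (pdirac ts); first exact: Delta_dirac.
  move=> q Dq.
  have pd0 (s : S) : (0 <= p s)%R by exact: p0.
  rewrite pimix_dirac_q // WE; apply: pimix_ge => //; first by rewrite subr_ge0.
  by move=> t; rewrite WE lee_fin lerB.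
split.
  apply/eqP; rewrite eq_le; apply/andP; split.
    apply: ge_ereal_sup => _ [p Dp <-]; apply: ge_ereal_inf.
    exists (pimix pi p (pdirac t0)); first by exists (pdirac t0).
    exact: pimix_le1.
  apply: ge1 => d d0.
  pose eps := Num.min d 1.
  have eps0 : (0 < eps)%R by rewrite lt_min d0 ltr01.
  have [n [f [f0 fz fs fm]]] := @good_all T pi' bnd Hbnd HL' R [:: [::]] 0%N eps eps0.
  pose p s := f (g s).
  have Dp : Delta R S p.
    split; first by move=> s; exact: f0.
    rewrite reidx /p; under eq_esum do rewrite eg.
    rewrite (@esum_finnat R _ n) ?fs // => i ni; apply: fz; by rewrite ni orbT.
  have Wp t : ((1 - eps)%:E <= W R S T pi p t)%E.
    rewrite /W reidx /p; under eq_esum do rewrite eg.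
    rewrite (@esum_finnat R _ n) => [|i|i ni]; last first.
    - by rewrite fz ?mul0r // ni orbT.
    - by rewrite mulr_ge0 //; case: (pi _ _).
    have h1 := fm [::] t (mem_head _ _) isT.
    have h2 : \sum_(i < n) f i * (pi (e i) t)%:R = \sum_(i < n | pi' i t) f i.
      rewrite [RHS]big_mkcond; apply: eq_bigr => i _.
      by rewrite /pi'; case: (pi (e i) t); rewrite ?mulr1 ?mulr0.
    have h3 : \sum_(i < n) f i = \sum_(i < n | pi' i t) f i + \sum_(i < n | ~~ pi' i t) f i.
      by rewrite (bigID (fun i : 'I_n => pi' i t)).
    rewrite lee_fin h2; move: h3; rewrite fs; move: h1; rewrite /pi'; lra.
  apply: le_trans (_ : (1 - eps)%:E <= _)%E.
    by rewrite lee_fin lerB // ge_min lexx.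
  apply: le_trans (_ : ereal_inf [set pimix pi p q | q in Delta R T] <= _)%E.
    apply/ereal_infP => _ [q Dq <-]; apply: pimix_ge => //; last by case: Dp.
    by rewrite subr_ge0 ge_min lexx orbT.
  by apply: ereal_sup_ubound; exists p.
split.
  exists (pdirac t0) => // q Dq; by rewrite !sup_q.
apply/eqP; rewrite eq_le; apply/andP; split.
  apply: ge_ereal_inf; exists 1%E => //; exists (pdirac t0) => //; exact: sup_q.
by apply/ereal_infP => _ [q Dq <-]; rewrite sup_q.
Qed.
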